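(* Let $(X,f)$ be the CCS dialgebra and $(X,g)$ the CCS coalgebra (see context), and let $\mathsf{F}(X)=X+(X\times X)$, $\mathsf{B}=\mathcal{P}$, $\mathsf{T}(X)=\mathcal{P}(L\times X)$, $\mathsf{Id}$ the identity functor. Let $E$ be the subcategory of epimorphisms of $\mathit{Dialg}(\mathsf{F},\mathsf{B})$ and $E'$ that of $\mathit{Dialg}(\mathsf{Id},\mathsf{T})$. Let $\mathcal{R}_{(X,f)}=(X,f)/E$ (the whole coslice), and let $\mathcal{R}_{(X,g)}$ be the full subcategory of $(X,g)/E'$ whose objects are those epimorphisms $h$ out of $(X,g)$ such that for all processes $x,x',y,y'$, $h(x)=h(x')$ and $h(y)=h(y')$ imply $h(x\parallel y)=h(x'\parallel y')$. Then: (1) $\mathcal{R}_{(X,g)}$ satisfies conditions (1) and (2) required of $\mathcal{R}$ in the context; (2) $\mathit{id}_{\mathsf{F}X}$ is an invariant for $(X,g)$ and $\mathcal{R}_{(X,g)}$ from $\overline{\mathsf{F}}$ to $\mathsf{F}\circ\overline{\mathsf{Id}}=\overline{\mathsf{F}}$; (3) $\delta$ is an invariant for $(X,g)$ and $\mathcal{R}_{(X,g)}$ from $\mathsf{F}\circ\overline{\mathsf{T}}$ to $\overline{\mathsf{B}}$; (4) $\lambda$ is an invariant for $(X,f)$ and $\mathcal{R}_{(X,f)}$ from $\overline{\mathsf{Id}}$ to $\mathsf{T}\circ\overline{\mathsf{F}}$; (5) $\mu$ is an invariant for $(X,f)$ and $\mathcal{R}_{(X,f)}$ from $\mathsf{T}\circ\overline{\mathsf{B}}$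 to $\overline{\mathsf{T}}$.
   Context: General notions. For functors $\mathsf{F},\mathsf{B}:\mathbf{Set}\to\mathbf{Set}$, an $(\mathsf{F},\mathsf{B})$-dialgebra is a pair $(X,f)$ with $f:\mathsf{F}X\to\mathsf{B}X$; a homomorphism $h:(X,f)\to(Y,g)$ is a function with $g\circ\mathsf{F}h=\mathsf{B}h\circ f$. A $\mathsf{T}$-coalgebra is an $(\mathsf{Id},\mathsf{T})$-dialgebra. For a dialgebra $(X,f)$ and a subcategory $E$ of epimorphisms of its category, $(X,f)/E$ is the coslice: objects are epimorphisms $h:(X,f)\to(Y,g)$, arrows $h\to h'$ are epimorphisms $k$ with $k\circ h=h'$. A category $\mathcal{R}_{(X,f)}$ is required to be a full subcategory of $(X,f)/E$ with (1) for every object $h$ of $(X,f)/E$ an object $h'$ of $\mathcal{R}_{(X,f)}$ and an arrow $h\to h'$, and (2) $\mathit{id}_{(X,f)}$ an object. For an object $h$, $\hat h:\mathit{id}\to h$ is the arrow given by $h$. For $\mathsf{H}:\mathbf{Set}\to\mathbf{Set}$, the lifting $\overline{\mathsf{H}}:\mathcal{R}_{(X,f)}\to\mathbf{Set}$ is $\overline{\mathsf{H}}(h:(X,f)\to(Y,g))=\mathsf{H}Y$, $\overline{\mathsf{H}}(k)=\mathsf{H}k$; a composite like $\mathsf{T}\circ\overline{\mathsf{F}}$ sends $h$ to $\mathsf{T}\mathsf{F}Y$. For functors $\Phi,\Psi:\mathcal{R}_{(X,f)}\to\mathbf{Set}$, a function $k:\Phi(\mathit{id})\to\Psi(\mathit{id})$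 is an invariant from $\Phi$ to $\Psi$ iff for all $x_1,x_2\in\Phi(\mathit{id})$ and every object $h$, $\Phi\hat h(x_1)=\Phi\hat h(x_2)$ implies $\Psi\hat h(k(x_1))=\Psi\hat h(k(x_2))$. Functors: $\mathsf{F}(X)=X+(X\times X)$, $\mathsf{F}h(x)=h(x)$, $\mathsf{F}h(x,y)=(h(x),h(y))$ (elements written without coproduct tags); $\mathsf{B}(X)=\mathcal{P}(X)$, $\mathsf{B}h(S)=h[S]$; $\mathsf{T}(X)=\mathcal{P}(L\times X)$, $\mathsf{T}h(S)=\{(l,h(x))\mid(l,x)\in S\}$. CCS. Let $\mathcal{C}$ be a countable set of channels. Prefixes: $\alpha::=\tau\mid a\mid\bar a$ ($a\in\mathcal{C}$); $L$ is the set of prefixes. Processes: $P::=\sum_{i\in I}\alpha_i.P_i\mid P_1\parallel P_2\mid(\nu a)P$ with $I$ finite, sums taken up to reordering of summands; $\mathbf{0}$ is the empty sum, $\alpha.P$ a one-summand sum, and $\alpha.P+Q$ denotes a sum having $\alpha.P$ as a summand. $X$ is the set of processes. Free names: $\mathit{fn}(\tau)=\emptyset$, $\mathit{fn}(a)=\mathit{fn}(\bar a)=\{a\}$, $\mathit{fn}(\sum\alpha_i.P_i)=\bigcup_i(\mathit{fn}(\alpha_i)\cup\mathit{fn}(P_i))$, $\mathit{fn}(P\parallel Q)=\mathit{fn}(P)\cup\mathit{fn}(Q)$, $\mathit{fn}((\nu a)P)=\mathit{fn}(P)\setminus\{a\}$. Structural congruence $\equiv$ is the least congruence containing $\alpha$-conversion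 of $a$ in $(\nu a)P$, the commutative monoid laws for $\parallel$ with unit $\mathbf{0}$, and $(\nu a)(P\parallel Q)\equiv((\nu a)P)\parallel Q$ if $a\notin\mathit{fn}(Q)$, $(\nu a)\mathbf{0}\equiv\mathbf{0}$, $(\nu a)(\nu b)P\equiv(\nu b)(\nu a)P$. The CCS LTS is the least relation $P\xrightarrow{\alpha}P'$ closed under: (pre) $\alpha.P+Q\xrightarrow{\alpha}P$; (res) if $a\notin\mathit{fn}(\alpha)$ and $P\xrightarrow{\alpha}P'$ then $(\nu a)P\xrightarrow{\alpha}(\nu a)P'$; (par) if $P\xrightarrow{\alpha}P'$ then $P\parallel Q\xrightarrow{\alpha}P'\parallel Q$; (syn) if $P\xrightarrow{\bar c}P'$ and $Q\xrightarrow{c}Q'$ then $P\parallel Q\xrightarrow{\tau}P'\parallel Q'$; (str) if $P\equiv Q$, $P'\equiv Q'$ and $P\xrightarrow{\alpha}P'$ then $Q\xrightarrow{\alpha}Q'$. The CCS coalgebra is $(X,g)$ with $g(x)=\{(\alpha,y)\mid x\xrightarrow{\alpha}y\}$. The CCS dialgebra is the $(\mathsf{F},\mathsf{B})$-dialgebra $(X,f)$ where $f$ is the least function (writing $P\to R$ for $R\in f(P)$ and $(P,Q)\to R$ for $R\in f(P,Q)$) closed under: (tau) $\tau.P+Q\to P$; (res) $P\to P'$ implies $(\nu a)P\to(\nu a)P'$; (par$_1$) $P\to P'$ implies $P\parallel Q\to P'\parallel Q$; (int) $(P,Q)\to R$ implies $P\parallel Q\to R$; (hid) $(P,Q)\to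 R$ and $a\notin\mathit{fn}(Q)$ imply $((\nu a)P,Q)\to(\nu a)R$; (par$_2$) $(P,Q)\to R$ implies $(P\parallel S,Q)\to S\parallel R$; (syn) $(\bar a.P+S,a.Q+T)\to P\parallel Q$; (sym) $(P,Q)\to R$ implies $(Q,P)\to R$; (str$_1$) $P\to R$, $P\equiv Q$, $R\equiv S$ imply $Q\to S$; (str$_2$) $(P,Q)\to R$, $P\equiv S$, $Q\equiv T$, $R\equiv U$ imply $(S,T)\to U$. The maps: $\delta:\mathsf{F}\mathsf{T}X\to\mathsf{B}X$ with $\delta(p)=\{x\mid(\tau,x)\in p\}$ for $p\in\mathsf{T}X$ and $\delta(p_1,p_2)=\{x\parallel y\mid\exists a\in\mathcal{C}.\,((a,x)\in p_1\wedge(\bar a,y)\in p_2)\vee((\bar a,x)\in p_1\wedge(a,y)\in p_2)\}$; $\lambda:X\to\mathsf{T}\mathsf{F}X$ with $\lambda(x)=\{(\tau,x)\}\cup\{(a,(x,\bar a.\mathbf{0}))\mid a\in\mathcal{C}\}\cup\{(\bar a,(x,a.\mathbf{0}))\mid a\in\mathcal{C}\}$; $\mu:\mathsf{T}\mathsf{B}X\to\mathsf{T}X$ with $\mu(q)=\{(l,x)\mid\exists q'.\,(l,q')\in q\wedge x\in q'\}$. *)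

(* Defs.v *)
(* Classical logic is used (only) to decide equality of channel
   names inside the name-swapping operation used for alpha-conversion. *)
From Stdlib Require Import List Permutation ClassicalEpsilon FunctionalExtensionality PropExtensionality.
Import ListNotations.

Set Implicit Arguments.

(* Set functors (object part, morphism part).  Powersets are modelled as
   predicates [A -> Prop]; equality of sets is Leibniz equality of
   predicates (extensional via the whitelisted axioms).                *)

Record SFun := {
  Fo : Type -> Type;
  Fm : forall A B : Type, (A -> B) -> Fo A -> Fo B;
  Fm_id : forall (A : Type) (x : Fo A), Fm (fun y : A => y) x = x
}.
Arguments Fm s {A B} _ _.

Definition IdF : SFun := {| Fo := fun A => A; Fm := fun A B h => h;
  Fm_id := fun A x => eq_refl |}.

Definition FF : SFun :=
  {| Fo := fun A => (A + A * A)%type;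
     Fm := fun A B h z => match z with
                          | inl x => inl (h x)
                          | inr (x, y) => inr (h x, h y)
                          end;
     Fm_id := fun A z => match z with inl _ => eq_refl | inr (_, _) => eq_refl end |}.

Lemma BF_id (A : Type) (S : A -> Prop) :
  (fun y => exists x, S x /\ x = y) = S.
Proof.
  apply functional_extensionality; intro y; apply propositional_extensionality.
  split; [intros [x [Hx <-]]; exact Hx | intro H; exists y; split; auto].
Qed.

Lemma TF_id (L A : Type) (S : L * A -> Prop) :
  (fun p => exists x, S (fst p, x) /\ x = snd p) = S.
Proof.
  apply functional_extensionality; intros [l y]; apply propositional_extensionality.
  simpl; split; [intros [x [Hx <-]]; exact Hx | intro H; exists y; split; auto].
Qed.

Definition BF : SFun :=
  {| Fo := fun A => A -> Prop;
     Fm := fun A B h S => fun y => exists x, S x /\ h x = y;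
     Fm_id := @BF_id |}.

Definition TF (L : Type) : SFun :=
  {| Fo := fun A => (L * A) -> Prop;
     Fm := fun A B h S => fun p => exists x, S (fst p, x) /\ h x = snd p;
     Fm_id := @TF_id L |}.

Lemma compF_id (G H : SFun) (A : Type) (x : Fo G (Fo H A)) :
  Fm G (Fm H (fun y : A => y)) x = x.
Proof.
  assert (E : Fm H (fun y : A => y) = fun y => y)
    by (apply functional_extensionality; intro; apply Fm_id).
  rewrite E; apply Fm_id.
Qed.

Definition compF (G H : SFun) : SFun :=
  {| Fo := fun A => Fo G (Fo H A);
     Fm := fun A B h => Fm G (Fm H h);
     Fm_id := @compF_id G H |}.

Record dialg (F B : SFun) := {
  car : Type;
  str : Fo F car -> Fo B car
}.
Arguments car {F B} _.
Arguments str {F B} _ _.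

Definition is_hom (F B : SFun) (D1 D2 : dialg F B) (h : car D1 -> car D2) : Prop :=
  forall x : Fo F (car D1), str D2 (Fm F h x) = Fm B h (str D1 x).

Definition is_epi (F B : SFun) (D1 D2 : dialg F B) (h : car D1 -> car D2) : Prop :=
  is_hom D1 D2 h /\
  forall (D3 : dialg F B) (a b : car D2 -> car D3),
    is_hom D2 D3 a -> is_hom D2 D3 b ->
    (forall x, a (h x) = b (h x)) -> forall y, a y = b y.

Record cosl_obj (F B : SFun) (D : dialg F B) := {
  cod : dialg F B;
  omap : car D -> car cod;
  omap_epi : is_epi D cod omap
}.
Arguments cod {F B D} _.
Arguments omap {F B D} _ _.

Definition cosl_arrow (F B : SFun) (D : dialg F B) (h h' : cosl_obj D)
    (k : car (cod h) -> car (cod h')) : Prop :=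
  is_epi (cod h) (cod h') k /\ forall x, k (omap h x) = omap h' x.

Lemma id_is_epi (F B : SFun) (D : dialg F B) : is_epi D D (fun x => x).
Proof.
  split.
  - intro x. rewrite !Fm_id. reflexivity.
  - intros D3 a b _ _ H y. exact (H y).
Qed.

Definition id_obj (F B : SFun) (D : dialg F B) : cosl_obj D :=
  {| cod := D; omap := fun x => x; omap_epi := id_is_epi D |}.

(* A full subcategory of D/E (given by a predicate on objects) satisfies
   conditions (1) and (2) of the context. *)
Definition R_conditions (F B : SFun) (D : dialg F B) (Rp : cosl_obj D -> Prop) : Prop :=
  (forall h : cosl_obj D, exists h' : cosl_obj D,
       Rp h' /\ exists k, cosl_arrow h h' k) /\
  Rp (id_obj D).

(* k is an invariant for D and R from the lifting of G to the lifting of H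
   (Phi(h : D -> (Y,_)) = G Y, Phi(k) = G k, and hat h is h itself). *)
Definition is_invariant (F B : SFun) (D : dialg F B) (Rp : cosl_obj D -> Prop)
    (G H : SFun) (k : Fo G (car D) -> Fo H (car D)) : Prop :=
  forall (x1 x2 : Fo G (car D)) (h : cosl_obj D), Rp h ->
    Fm G (omap h) x1 = Fm G (omap h) x2 ->
    Fm H (omap h) (k x1) = Fm H (omap h) (k x2).

Section CCS.
Variable C : Type.

Inductive prefix : Type :=
| tau : prefix
| inp : C -> prefix
| out : C -> prefix.

(* processes; a sum is a finite list of summands, considered up to
   reordering through structural congruence (rule sc_perm) *)
Inductive proc : Type :=
| Sum : list (prefix * proc) -> proc
| Par : proc -> proc -> proc
| Nu  : C -> proc -> proc.

Definition nil0 : proc := Sum [].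

Definition fn_pre (al : prefix) (c : C) : Prop :=
  match al with
  | tau => False
  | inp a => c = a
  | out a => c = a
  end.

Fixpoint fn (P : proc) (c : C) : Prop :=
  match P with
  | Sum l => (fix fnl (l : list (prefix * proc)) : Prop :=
                match l with
                | [] => False
                | (al, Q) :: l' => fn_pre al c \/ fn Q c \/ fnl l'
                end) l
  | Par P Q => fn P c \/ fn Q c
  | Nu a P => fn P c /\ c <> a
  end.

Definition swapn (a b c : C) : C :=
  if excluded_middle_informative (c = a) then b
  else if excluded_middle_informative (c = b) then a else c.

Definition swap_pre (a b : C) (al : prefix) : prefix :=
  match al with
  | tau => tau
  | inp c => inp (swapn a b c)
  | out c => out (swapn a b c)
  end.

Fixpoint swap (a b : C) (P : proc) : proc :=
  match P with
  | Sum l => Sum ((fix swl (l : list (prefix * proc)) :=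
                     match l with
                     | [] => []
                     | (al, Q) :: l' => (swap_pre a b al, swap a b Q) :: swl l'
                     end) l)
  | Par P Q => Par (swap a b P) (swap a b Q)
  | Nu c P => Nu (swapn a b c) (swap a b P)
  end.

Inductive sc : proc -> proc -> Prop :=
| sc_refl P : sc P P
| sc_sym P Q : sc P Q -> sc Q P
| sc_trans P Q R : sc P Q -> sc Q R -> sc P R
| sc_sum l1 l2 al P P' : sc P P' ->
    sc (Sum (l1 ++ (al, P) :: l2)) (Sum (l1 ++ (al, P') :: l2))
| sc_parl P P' Q : sc P P' -> sc (Par P Q) (Par P' Q)
| sc_parr P Q Q' : sc Q Q' -> sc (Par P Q) (Par P Q')
| sc_nu a P P' : sc P P' -> sc (Nu a P) (Nu a P')
| sc_perm l l' : Permutation l l' -> sc (Sum l) (Sum l')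
| sc_alpha a b P : ~ fn P b -> sc (Nu a P) (Nu b (swap a b P))
| sc_par_assoc P Q R : sc (Par P (Par Q R)) (Par (Par P Q) R)
| sc_par_comm P Q : sc (Par P Q) (Par Q P)
| sc_par_unit P : sc (Par P nil0) P
| sc_nu_par a P Q : ~ fn Q a -> sc (Nu a (Par P Q)) (Par (Nu a P) Q)
| sc_nu_nil a : sc (Nu a nil0) nil0
| sc_nu_nu a b P : sc (Nu a (Nu b P)) (Nu b (Nu a P)).

Inductive step : proc -> prefix -> proc -> Prop :=
| st_pre l al P : In (al, P) l -> step (Sum l) al P
| st_res a al P P' : ~ fn_pre al a -> step P al P' -> step (Nu a P) al (Nu a P')
| st_par P Q al P' : step P al P' -> step (Par P Q) al (Par P' Q)
| st_syn c P P' Q Q' : step P (out c) P' -> step Q (inp c) Q' ->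
    step (Par P Q) tau (Par P' Q')
| st_str P Q P' Q' al : sc P Q -> sc P' Q' -> step P al P' -> step Q al Q'.

Definition ccs_coalg : dialg IdF (TF prefix) :=
  {| car := proc; str := (fun (x : proc) (p : prefix * proc) => step x (fst p) (snd p)) : Fo IdF proc -> Fo (TF prefix) proc |}.

(* the CCS dialgebra relations: f1 P R  is  P -> R ;  f2 P Q R  is (P,Q) -> R *)
Inductive f1 : proc -> proc -> Prop :=
| f_tau l P : In (tau, P) l -> f1 (Sum l) P
| f_res a P P' : f1 P P' -> f1 (Nu a P) (Nu a P')
| f_par1 P P' Q : f1 P P' -> f1 (Par P Q) (Par P' Q)
| f_int P Q R : f2 P Q R -> f1 (Par P Q) R
| f_str1 P Q R S : f1 P R -> sc P Q -> sc R S -> f1 Q S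
with f2 : proc -> proc -> proc -> Prop :=
| f_hid a P Q R : f2 P Q R -> ~ fn Q a -> f2 (Nu a P) Q (Nu a R)
| f_par2 P Q R S : f2 P Q R -> f2 (Par P S) Q (Par S R)
| f_syn a P Q l1 l2 : In (out a, P) l1 -> In (inp a, Q) l2 ->
    f2 (Sum l1) (Sum l2) (Par P Q)
| f_sym P Q R : f2 P Q R -> f2 Q P R
| f_str2 P Q R S T U : f2 P Q R -> sc P S -> sc Q T -> sc R U -> f2 S T U.

Definition ccs_f (z : proc + proc * proc) : proc -> Prop :=
  match z with
  | inl P => f1 P
  | inr (P, Q) => f2 P Q
  end.

Definition ccs_dialg : dialg FF BF := {| car := proc; str := (ccs_f : Fo FF proc -> Fo BF proc) |}.

Definition delta (z : Fo (compF FF (TF prefix)) proc) : Fo BF proc :=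
  match z with
  | inl p => fun x => p (tau, x)
  | inr (p1, p2) => fun z => exists x y a, z = Par x y /\
      ((p1 (inp a, x) /\ p2 (out a, y)) \/ (p1 (out a, x) /\ p2 (inp a, y)))
  end.

Definition lambda (x : Fo IdF proc) : Fo (compF (TF prefix) FF) proc :=
  fun p =>
    (fst p = tau /\ snd p = inl x) \/
    (exists a, fst p = inp a /\ snd p = inr (x, Sum [(out a, nil0)])) \/
    (exists a, fst p = out a /\ snd p = inr (x, Sum [(inp a, nil0)])).

Definition mu (q : Fo (compF (TF prefix) BF) proc) : Fo (TF prefix) proc :=
  fun p => exists q', q (fst p, q') /\ q' (snd p).

Definition R_f (h : cosl_obj ccs_dialg) : Prop := True.

Definition R_g (h : cosl_obj ccs_coalg) : Prop :=
  forall x x' y y' : proc, omap h x = omap h x' -> omap h y = omap h y' ->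
    omap h (Par x y) = omap h (Par x' y').

End CCS.

Arguments nil0 {C}.
Arguments R_conditions {F B} D Rp.
Arguments is_invariant {F B} D Rp G H k.
Arguments R_g {C} h.
Arguments R_f {C} h.
Arguments delta {C} z _.
Arguments lambda {C} x p.
Arguments mu {C} q p.

(* Main.v *)
Require Import Defs.
From Stdlib Require Import List Permutation ClassicalEpsilon FunctionalExtensionality PropExtensionality ProofIrrelevance.
Import ListNotations.

Section Harm.
Variable C : Type.
Notation proc := (proc C).
Notation prefix := (prefix C).
Implicit Types (a b c d : C) (al : prefix) (P Q : proc) (l : list (prefix * proc)).

Section PI.
Variable Pr : proc -> Prop.
Hypothesis HSum : forall l, Forall (fun p => Pr (snd p)) l -> Pr (Sum l).
Hypothesis HPar : forall P Q, Pr P -> Pr Q -> Pr (Par P Q).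
Hypothesis HNu : forall a P, Pr P -> Pr (Nu a P).
Fixpoint proc_ind2 (P : proc) : Pr P :=
  match P with
  | Sum l => HSum l ((fix go (l : list (prefix * proc)) : Forall (fun p => Pr (snd p)) l :=
       match l with
       | [] => Forall_nil _
       | p :: l' => Forall_cons p (match p return Pr (snd p) with (al, Q) => proc_ind2 Q end) (go l')
       end) l)
  | Par P Q => HPar P Q (proc_ind2 P) (proc_ind2 Q)
  | Nu a P => HNu a P (proc_ind2 P)
  end.
End PI.

Lemma swapn_inv a b c : swapn a b (swapn a b c) = c.
Proof.
  unfold swapn.
  repeat (destruct excluded_middle_informative; subst; try congruence).
Qed.
Lemma swapn_a a b : swapn a b a = b.
Proof. unfold swapn. destruct excluded_middle_informative; congruence. Qed.
Lemma swapn_b a b : swapn a b b = a.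
Proof. unfold swapn. repeat (destruct excluded_middle_informative; subst; try congruence). Qed.
Lemma swapn_other a b c : c <> a -> c <> b -> swapn a b c = c.
Proof. unfold swapn. repeat (destruct excluded_middle_informative; subst; try congruence). Qed.
Lemma swapn_inj a b c d : swapn a b c = swapn a b d -> c = d.
Proof. intro H. rewrite <- (swapn_inv a b c), <- (swapn_inv a b d), H. reflexivity. Qed.

Lemma fn_pre_swap a b al c : fn_pre (swap_pre a b al) (swapn a b c) <-> fn_pre al c.
Proof.
  destruct al; simpl; split; intro H; auto; subst; auto; eapply swapn_inj; eauto.
Qed.

Lemma fn_Sum (l : list (prefix * proc)) c :
  fn (Sum l) c <-> exists al Q, In (al, Q) l /\ (fn_pre al c \/ fn Q c).
Proof.
  induction l as [|[al Q] l IH]; simpl.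
  - split; [tauto | intros (? & ? & [] & _)].
  - split.
    + intros [H|[H|H]].
      * exists al, Q; auto.
      * exists al, Q; auto.
      * apply IH in H. destruct H as (al' & Q' & H1 & H2). exists al', Q'; auto.
    + intros (al' & Q' & [E|H1] & H2).
      * inversion E; subst. tauto.
      * right; right. apply IH. eauto.
Qed.

Definition swp a b (p : prefix * proc) := (swap_pre a b (fst p), swap a b (snd p)).

Lemma swap_Sum a b l : swap a b (Sum l) = Sum (map (swp a b) l).
Proof.
  induction l as [|[al Q] l IH]; simpl; auto.
  simpl in IH. injection IH as IH. rewrite IH. reflexivity.
Qed.

Lemma swap_pre_inv a b al : swap_pre a b (swap_pre a b al) = al.
Proof. destruct al; simpl; rewrite ?swapn_inv; auto. Qed.

Lemma swap_inv a b P : swap a b (swap a b P) = P.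
Proof.
  induction P using proc_ind2.
  - rewrite !swap_Sum, map_map. f_equal.
    induction H as [|[al Q] l HQ Hl IHl]; simpl in *; auto.
    unfold swp at 1 2; simpl. rewrite swap_pre_inv, HQ. f_equal. auto.
  - simpl; rewrite IHP1, IHP2; auto.
  - simpl; rewrite swapn_inv, IHP; auto.
Qed.

Lemma fn_swap a b P : forall c, fn (swap a b P) c <-> fn P (swapn a b c).
Proof.
  induction P using proc_ind2; intro c.
  - rewrite swap_Sum, !fn_Sum. split.
    + intros (al & Q & Hin & Hf). apply in_map_iff in Hin.
      destruct Hin as ([al0 Q0] & E & Hin). unfold swp in E; simpl in E. inversion E; subst.
      rewrite Forall_forall in H. specialize (H _ Hin). simpl in H.
      exists al0, Q0. split; auto. destruct Hf as [Hf|Hf].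
      * left. rewrite <- (swapn_inv a b c) in Hf. apply fn_pre_swap in Hf. exact Hf.
      * right. apply H. exact Hf.
    + intros (al & Q & Hin & Hf). exists (swap_pre a b al), (swap a b Q). split.
      * apply in_map_iff. exists (al, Q). auto.
      * rewrite Forall_forall in H. specialize (H _ Hin). simpl in H.
        destruct Hf as [Hf|Hf].
        -- left. rewrite <- (swapn_inv a b c). apply fn_pre_swap. exact Hf.
        -- right. apply H. exact Hf.
  - simpl; rewrite IHP1, IHP2. tauto.
  - simpl; rewrite IHP. split; intros [H1 H2]; split; auto.
    + intro E. apply H2. subst. rewrite swapn_inv. auto.
    + intro E. apply H2. rewrite E. rewrite swapn_inv. auto.
Qed.


Inductive steps : proc -> prefix -> proc -> Prop :=
| s_pre l al P : In (al, P) l -> steps (Sum l) al P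
| s_res a al P P' : ~ fn_pre al a -> steps P al P' -> steps (Nu a P) al (Nu a P')
| s_parl P Q al P' : steps P al P' -> steps (Par P Q) al (Par P' Q)
| s_parr P Q al Q' : steps Q al Q' -> steps (Par P Q) al (Par P Q')
| s_synl c P P' Q Q' : steps P (out c) P' -> steps Q (inp c) Q' -> steps (Par P Q) (tau C) (Par P' Q')
| s_synr c P P' Q Q' : steps P (inp c) P' -> steps Q (out c) Q' -> steps (Par P Q) (tau C) (Par P' Q').
Hint Constructors steps : core.

Lemma steps_label P al P' c : steps P al P' -> fn_pre al c -> fn P c.
Proof.
  induction 1; intro H'; simpl in *; try tauto.
  - apply fn_Sum. exists al, P. auto.
  - split; auto. intro E; subst; auto.
Qed.

Lemma steps_fn P al P' c : steps P al P' -> fn P' c -> fn P c.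
Proof.
  induction 1; intro H'; simpl in *; try tauto.
  - apply fn_Sum. exists al, P. auto.
Qed.

Lemma steps_swap a b P al P' : steps P al P' -> steps (swap a b P) (swap_pre a b al) (swap a b P').
Proof.
  induction 1.
  - rewrite swap_Sum. constructor. apply in_map_iff. exists (al, P). auto.
  - simpl. constructor; auto. rewrite fn_pre_swap. auto.
  - simpl. auto.
  - simpl. auto.
  - simpl in *. eauto.
  - simpl in *. eauto.
Qed.

Lemma steps_sound P al P' : steps P al P' -> step P al P'.
Proof.
  induction 1.
  - constructor; auto.
  - constructor; auto.
  - constructor; auto.
  - apply st_str with (Par Q P) (Par Q' P); try apply sc_par_comm. constructor; auto.
  - eapply st_syn; eauto.
  - apply st_str with (Par Q P) (Par Q' P'); try apply sc_par_comm. eapply st_syn; eauto.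
Qed.

Lemma nil_nostep al P : ~ steps nil0 al P.
Proof. intro H. inversion H as [l0 al0 P0 Hin| | | | |]; subst. destruct Hin. Qed.

Definition sim2 P Q :=
  (forall al P', steps P al P' -> exists Q', steps Q al Q' /\ sc P' Q') /\
  (forall al Q', steps Q al Q' -> exists P', steps P al P' /\ sc P' Q').

Ltac fin L := eexists; split; [ idtac | apply L ]; eauto 8.

Lemma swap_pre_id a b al : ~ fn_pre al a -> ~ fn_pre al b -> swap_pre a b al = al.
Proof. destruct al; simpl; intros; auto; rewrite swapn_other; auto. Qed.

Ltac inv_steps := repeat match goal with
  | H : steps (Par _ _) _ _ |- _ => inversion H; subst; clear H
  | H : steps (Nu _ _) _ _ |- _ => inversion H; subst; clear H
  end.

Lemma harmony P Q : sc P Q -> sim2 P Q.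
Proof.
  induction 1.
  - split; intros; eexists; split; eauto; apply sc_refl.
  - destruct IHsc as [H1 H2]. split.
    + intros al P' Hs. destruct (H2 _ _ Hs) as (Q' & Hq & Hsc). exists Q'. split; auto. apply sc_sym; auto.
    + intros al Q' Hs. destruct (H1 _ _ Hs) as (P' & Hp & Hsc). exists P'. split; auto. apply sc_sym; auto.
  - destruct IHsc1 as [H1 H2], IHsc2 as [H3 H4]. split.
    + intros al P' Hs. destruct (H1 _ _ Hs) as (Q' & Hq & Hsc).
      destruct (H3 _ _ Hq) as (R' & Hr & Hsc'). exists R'. split; auto. eapply sc_trans; eauto.
    + intros al R' Hs. destruct (H4 _ _ Hs) as (Q' & Hq & Hsc).
      destruct (H2 _ _ Hq) as (P' & Hp & Hsc'). exists P'. split; auto. eapply sc_trans; eauto.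
  - split.
    + intros al0 X Hs. inversion Hs; subst.
      match goal with Hi : In _ (_ ++ _) |- _ => apply in_app_or in Hi; destruct Hi as [Hi|[E|Hi]] end.
      * exists X. split; [constructor; apply in_or_app; auto | apply sc_refl].
      * inversion E; subst. exists P'. split; auto. constructor; apply in_or_app; simpl; auto.
      * exists X. split; [constructor; apply in_or_app; simpl; auto | apply sc_refl].
    + intros al0 X Hs. inversion Hs; subst.
      match goal with Hi : In _ (_ ++ _) |- _ => apply in_app_or in Hi; destruct Hi as [Hi|[E|Hi]] end.
      * exists X. split; [constructor; apply in_or_app; auto | apply sc_refl].
      * inversion E; subst. exists P. split; auto. constructor; apply in_or_app; simpl; auto.
      * exists X. split; [constructor; apply in_or_app; simpl; auto | apply sc_refl].
  - destruct IHsc as [H1 H2]. split.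
    + intros al X Hs. inversion Hs; subst;
      try (match goal with Hp : steps P _ _ |- _ => destruct (H1 _ _ Hp) as (Y & Hy & Hsc) end);
      (eexists; split; [ idtac | apply sc_parl; eassumption ]; eauto).
    + intros al X Hs. inversion Hs; subst;
      try (match goal with Hp : steps P' _ _ |- _ => destruct (H2 _ _ Hp) as (Y & Hy & Hsc) end);
      (eexists; split; [ idtac | apply sc_parl; eassumption ]; eauto).
  - destruct IHsc as [H1 H2]. split.
    + intros al X Hs. inversion Hs; subst;
      try (match goal with Hp : steps Q _ _ |- _ => destruct (H1 _ _ Hp) as (Y & Hy & Hsc) end);
      (eexists; split; [ idtac | apply sc_parr; eassumption ]; eauto).
    + intros al X Hs. inversion Hs; subst;
      try (match goal with Hp : steps Q' _ _ |- _ => destruct (H2 _ _ Hp) as (Y & Hy & Hsc) end);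
      (eexists; split; [ idtac | apply sc_parr; eassumption ]; eauto).
  - destruct IHsc as [H1 H2]. split.
    + intros al X Hs. inversion Hs; subst;
      try (match goal with Hp : steps P _ _ |- _ => destruct (H1 _ _ Hp) as (Y & Hy & Hsc) end);
      (eexists; split; [ idtac | apply sc_nu; eassumption ]; eauto).
    + intros al X Hs. inversion Hs; subst;
      try (match goal with Hp : steps P' _ _ |- _ => destruct (H2 _ _ Hp) as (Y & Hy & Hsc) end);
      (eexists; split; [ idtac | apply sc_nu; eassumption ]; eauto).
  - split.
    + intros al X Hs. inversion Hs; subst. exists X. split; [|apply sc_refl].
      constructor. eapply Permutation_in; eauto.
    + intros al X Hs. inversion Hs; subst. exists X. split; [|apply sc_refl].
      constructor. eapply Permutation_in; [apply Permutation_sym|]; eauto.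
  - split; intros al X Hs; inversion Hs as [| a0 al0 P0 P1 Hn Hp | | | |]; subst.
    + assert (Hb : ~ fn_pre al b) by (intro Hf; apply H; eapply steps_label; eauto).
      pose proof (steps_swap a b _ _ _ Hp) as Hw. rewrite swap_pre_id in Hw by auto.
      exists (Nu b (swap a b P1)). split; [constructor; auto|].
      apply sc_alpha. intro Hf; apply H; eapply steps_fn; eauto.
    + assert (Ha : ~ fn_pre al a).
      { intro Hf; apply H. pose proof (steps_label _ _ _ _ Hp Hf) as Hq.
        rewrite fn_swap, swapn_a in Hq; exact Hq. }
      pose proof (steps_swap a b _ _ _ Hp) as Hw. rewrite swap_pre_id, swap_inv in Hw by auto.
      exists (Nu a (swap a b P1)). split; [constructor; auto|].
      assert (Hfn : ~ fn (swap a b P1) b).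
      { rewrite fn_swap, swapn_b. intro Hf. apply H.
        pose proof (steps_fn _ _ _ _ Hp Hf) as Hq.
        rewrite fn_swap, swapn_a in Hq. exact Hq. }
      pose proof (sc_alpha a b _ Hfn) as Hs'. rewrite swap_inv in Hs'. exact Hs'.
  - split; intros al X Hs; inv_steps.
    all: try (fin sc_par_assoc; fail).
  - split; intros al X Hs; inv_steps; fin sc_par_comm.
  - split; intros al X Hs; inv_steps.
    all: try (exfalso; eapply nil_nostep; eauto; fail).
    all: fin sc_par_unit.
  - split; intros al X Hs; inv_steps.
    all: (eexists; split; [ idtac | apply sc_nu_par ]).
    all: try (eauto; fail).
    all: try (intro Hf; apply H; eapply steps_fn; eauto; fail).
    all: try (econstructor; [ eapply s_res; [ | eassumption] | eassumption ];
              simpl; intro Hf; subst; apply H; eapply steps_label; [eassumption | simpl; auto]).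
    all: constructor; auto; intro Hf; apply H; eapply steps_label; eauto.
  - split; intros al X Hs; inv_steps.
    all: try (exfalso; eapply nil_nostep; eauto; fail).
  - split; intros al X Hs; inv_steps; fin sc_nu_nu.
Qed.

Lemma complete P al P' : step P al P' -> exists P'', steps P al P'' /\ sc P'' P'.
Proof.
  induction 1.
  - exists P. split; [constructor; auto | apply sc_refl].
  - destruct IHstep as (X & Hx & Hsc). exists (Nu a X). split; auto. apply sc_nu; auto.
  - destruct IHstep as (X & Hx & Hsc). exists (Par X Q). split; auto. apply sc_parl; auto.
  - destruct IHstep1 as (X & Hx & Hsc), IHstep2 as (Y & Hy & Hsc').
    exists (Par X Y). split; eauto. eapply sc_trans; [apply sc_parl; eauto | apply sc_parr; eauto].
  - destruct IHstep as (X & Hx & Hsc). destruct (harmony _ _ H) as [H2 _].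
    destruct (H2 _ _ Hx) as (Y & Hy & Hsc'). exists Y. split; auto.
    eapply sc_trans; [apply sc_sym; exact Hsc'|]. eapply sc_trans; [exact Hsc | exact H0].
Qed.

Lemma st_parr P Q al Q' : step Q al Q' -> step (Par P Q) al (Par P Q').
Proof. intro H. apply st_str with (Par Q P) (Par Q' P); try apply sc_par_comm. constructor; auto. Qed.

Lemma st_synr c P P' Q Q' : step P (inp c) P' -> step Q (out c) Q' -> step (Par P Q) (tau C) (Par P' Q').
Proof. intros H1 H2. apply st_str with (Par Q P) (Par Q' P'); try apply sc_par_comm. eapply st_syn; eauto. Qed.

Definition is_bisim (R : proc -> proc -> Prop) := forall P Q, R P Q ->
  (forall al P', step P al P' -> exists Q', step Q al Q' /\ R P' Q') /\
  (forall al Q', step Q al Q' -> exists P', step P al P' /\ R P' Q').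

Definition bisim P Q := exists R, is_bisim R /\ R P Q.

Lemma bisim_refl P : bisim P P.
Proof.
  exists (@eq proc). split; auto. intros X Y <-. split; intros; eexists; eauto.
Qed.

Lemma bisim_sym P Q : bisim P Q -> bisim Q P.
Proof.
  intros (R & HR & H). exists (fun x y => R y x). split; auto.
  intros X Y H'. destruct (HR _ _ H') as [H1 H2]. split; auto.
Qed.

Lemma bisim_trans P Q S : bisim P Q -> bisim Q S -> bisim P S.
Proof.
  intros (R1 & HR1 & H1) (R2 & HR2 & H2).
  exists (fun x z => exists y, R1 x y /\ R2 y z). split; eauto.
  intros X Z (Y & Hxy & Hyz). destruct (HR1 _ _ Hxy) as [A1 A2], (HR2 _ _ Hyz) as [B1 B2]. split.
  - intros al X' Hs. destruct (A1 _ _ Hs) as (Y' & Hy & Hr). destruct (B1 _ _ Hy) as (Z' & Hz & Hr').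
    eauto.
  - intros al Z' Hs. destruct (B2 _ _ Hs) as (Y' & Hy & Hr). destruct (A2 _ _ Hy) as (X' & Hx & Hr').
    eauto.
Qed.

Lemma bisim_bisim : is_bisim bisim.
Proof.
  intros X Y (R & HR & H). destruct (HR _ _ H) as [H1 H2]. split.
  - intros al X' Hs. destruct (H1 _ _ Hs) as (Y' & Hy & Hr). exists Y'. split; auto. exists R; auto.
  - intros al Y' Hs. destruct (H2 _ _ Hs) as (X' & Hx & Hr). exists X'. split; auto. exists R; auto.
Qed.

Definition Rpar S S' := exists P P' Q Q', bisim P P' /\ bisim Q Q' /\ sc S (Par P Q) /\ sc S' (Par P' Q').

Lemma Rpar_fwd S S' : Rpar S S' -> forall al T, step S al T -> exists T', step S' al T' /\ Rpar T T'.
Proof.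
  intros (P & P' & Q & Q' & HP & HQ & H1 & H2) al T Hs.
  assert (Hs' : step (Par P Q) al T) by (eapply st_str; [exact H1 | apply sc_refl | exact Hs]).
  destruct (complete _ _ _ Hs') as (T0 & Ht0 & Hsc).
  assert (Hb : forall X Y al X', bisim X Y -> steps X al X' -> exists Y', step Y al Y' /\ bisim X' Y').
  { intros X Y al0 X' Hb Hx. apply steps_sound in Hx. destruct (bisim_bisim _ _ Hb) as [A _]. eauto. }
  assert (Hlift : forall Z, step (Par P' Q') al Z -> step S' al Z).
  { intros Z Hz. eapply st_str; [apply sc_sym; exact H2 | apply sc_refl | exact Hz]. }
  inversion Ht0; subst.
  - match goal with Hx : steps P _ _ |- _ => destruct (Hb _ _ _ _ HP Hx) as (Y & Hy & Hr) end.
    eexists. split.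
    + apply Hlift. constructor; eauto.
    + do 4 eexists. split; [exact Hr|]. split; [exact HQ|]. split; [apply sc_sym; eauto | apply sc_refl].
  - match goal with Hx : steps Q _ _ |- _ => destruct (Hb _ _ _ _ HQ Hx) as (Y & Hy & Hr) end.
    eexists. split.
    + apply Hlift. apply st_parr; eauto.
    + do 4 eexists. split; [exact HP|]. split; [exact Hr|]. split; [apply sc_sym; eauto | apply sc_refl].
  - match goal with Hx : steps P _ _ |- _ => destruct (Hb _ _ _ _ HP Hx) as (Y & Hy & Hr) end.
    match goal with Hx : steps Q _ _ |- _ => destruct (Hb _ _ _ _ HQ Hx) as (Z & Hz & Hr') end.
    eexists. split.
    + apply Hlift. eapply st_syn; eauto.
    + do 4 eexists. split; [exact Hr|]. split; [exact Hr'|]. split; [apply sc_sym; eauto | apply sc_refl].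
  - match goal with Hx : steps P _ _ |- _ => destruct (Hb _ _ _ _ HP Hx) as (Y & Hy & Hr) end.
    match goal with Hx : steps Q _ _ |- _ => destruct (Hb _ _ _ _ HQ Hx) as (Z & Hz & Hr') end.
    eexists. split.
    + apply Hlift. eapply st_synr; eauto.
    + do 4 eexists. split; [exact Hr|]. split; [exact Hr'|]. split; [apply sc_sym; eauto | apply sc_refl].
Qed.

Lemma Rpar_sym S S' : Rpar S S' -> Rpar S' S.
Proof.
  intros (P & P' & Q & Q' & HP & HQ & H1 & H2). exists P', P, Q', Q.
  repeat split; auto; apply bisim_sym; auto.
Qed.

Lemma bisim_par P P' Q Q' : bisim P P' -> bisim Q Q' -> bisim (Par P Q) (Par P' Q').
Proof.
  intros HP HQ. exists Rpar. split.
  - intros X Y H. split.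
    + apply Rpar_fwd; auto.
    + intros al Y' Hs. destruct (Rpar_fwd _ _ (Rpar_sym _ _ H) _ _ Hs) as (X' & Hx & Hr).
      exists X'. split; auto. apply Rpar_sym; auto.
  - exists P, P', Q, Q'. repeat split; auto; apply sc_refl.
Qed.


Lemma surj_epi (F B : SFun) (D1 D2 : dialg F B) (h : car D1 -> car D2) :
  is_hom D1 D2 h -> (forall y, exists x, h x = y) -> is_epi D1 D2 h.
Proof.
  intros Hh Hs. split; auto. intros D3 a b _ _ Heq y. destruct (Hs y) as [x <-]. auto.
Qed.

Lemma hom_closed (L : Type) (D1 D2 : dialg IdF (TF L)) (h : car D1 -> car D2) :
  is_hom D1 D2 h -> forall x (k : L) y', str D2 (h x) (k, y') -> exists x', str D1 x (k, x') /\ h x' = y'.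
Proof.
  intros Hh x k y' H. pose proof (Hh x) as E. simpl in E. rewrite E in H. exact H.
Qed.

Lemma epi_surj (L : Type) (D1 D2 : dialg IdF (TF L)) (h : car D1 -> car D2) :
  is_epi D1 D2 h -> forall y, exists x, h x = y.
Proof.
  intros [Hh Hepi] y.
  pose (inIm := fun y : car D2 => if excluded_middle_informative (exists x, h x = y) then true else false).
  pose (a := fun y : car D2 => (y, true)).
  pose (bf := fun y : car D2 => (y, inIm y)).
  pose (D3 := Build_dialg IdF (TF L) (car D2 * bool)
     ((fun z => let (y, bb) := z in if bb then Fm (TF L) a (str D2 y) else Fm (TF L) bf (str D2 y))
       : Fo IdF (car D2 * bool) -> Fo (TF L) (car D2 * bool))).
  assert (Ha : is_hom D2 D3 a) by (intro; reflexivity).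
  assert (Hb : is_hom D2 D3 bf).
  { intro y0. simpl. unfold bf at 1, inIm at 1.
    destruct (excluded_middle_informative (exists x, h x = y0)) as [[x Hx]|Hn]; [|reflexivity].
    apply functional_extensionality; intros [lb z]; apply propositional_extensionality; simpl.
    split; intros (y' & Hy & E); exists y'; split; auto; rewrite <- E; unfold a, bf, inIm;
      (destruct (excluded_middle_informative (exists x, h x = y')) as [_|Hn]; [reflexivity|]);
      exfalso; apply Hn; subst y0; destruct (hom_closed _ _ _ _ Hh x _ _ Hy) as (x' & _ & Hx'); eauto. }
  assert (Hag : forall x, a (h x) = bf (h x)).
  { intro x. unfold a, bf, inIm. destruct (excluded_middle_informative (exists x0, h x0 = h x)) as [_|Hn];
    [reflexivity | exfalso; eauto]. }
  pose proof (Hepi D3 a bf Ha Hb Hag y) as E. unfold a, bf, inIm in E.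
  destruct (excluded_middle_informative (exists x, h x = y)) as [Hx|_]; [exact Hx | discriminate].
Qed.

Lemma bisim_eq (x y : proc) : bisim x = bisim y <-> bisim x y.
Proof.
  split.
  - intro E. rewrite E. apply bisim_refl.
  - intro H. apply functional_extensionality; intro z; apply propositional_extensionality. split; intro H'.
    + eapply bisim_trans; [apply bisim_sym; exact H | exact H'].
    + eapply bisim_trans; eauto.
Qed.

Definition Qc := {c : proc -> Prop | exists x, c = bisim x}.
Lemma sig_ext (c d : Qc) : proj1_sig c = proj1_sig d -> c = d.
Proof. destruct c, d; simpl; intro; subst; f_equal; apply proof_irrelevance. Qed.

Definition qstr (c : Qc) : prefix * Qc -> Prop :=
  fun p => exists x y, proj1_sig c = bisim x /\ proj1_sig (snd p) = bisim y /\ step x (fst p) y.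
Definition Qd : dialg IdF (TF prefix) :=
  Build_dialg IdF (TF prefix) Qc (qstr : Fo IdF Qc -> Fo (TF prefix) Qc).
Definition qmap (x : proc) : Qc := exist _ (bisim x) (ex_intro _ x eq_refl).

Lemma qmap_eq x y : qmap x = qmap y <-> bisim x y.
Proof.
  split.
  - intro E. apply (f_equal (@proj1_sig _ _)) in E. simpl in E. apply bisim_eq; auto.
  - intro H. apply sig_ext. simpl. apply bisim_eq; auto.
Qed.

Lemma qmap_hom : is_hom (ccs_coalg C) Qd qmap.
Proof.
  intro x. apply functional_extensionality; intros [lb c]; apply propositional_extensionality.
  simpl. unfold qstr; simpl. split.
  - intros (x0 & y0 & E1 & E2 & Hs). apply bisim_eq in E1.
    destruct (bisim_bisim _ _ E1) as [_ A]. destruct (A _ _ Hs) as (y1 & Hy1 & Hb).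
    exists y1. split; auto. apply sig_ext. simpl. rewrite E2. apply bisim_eq. exact Hb.
  - intros (y & Hs & <-). exists x, y. simpl. auto.
Qed.

Lemma qmap_surj : forall c : Qc, exists x, qmap x = c.
Proof. intros [cc [x E]]. exists x. apply sig_ext. simpl. auto. Qed.

Definition hq : cosl_obj (ccs_coalg C) :=
  {| cod := Qd; omap := (qmap : car (ccs_coalg C) -> car Qd); omap_epi := surj_epi _ _ _ _ _ qmap_hom qmap_surj |}.

Lemma hq_Rg : R_g hq.
Proof.
  intros x x' y y' H1 H2. simpl in *. apply qmap_eq in H1, H2. apply qmap_eq. apply bisim_par; auto.
Qed.

Lemma ker_bisim (D2 : dialg IdF (TF prefix)) (h : proc -> car D2) :
  is_hom (ccs_coalg C) D2 h -> forall x x', h x = h x' -> bisim x x'.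
Proof.
  intros Hh x x' E. exists (fun u v => h u = h v). split; auto.
  assert (K : forall u v, h u = h v -> forall al u', step u al u' -> exists v', step v al v' /\ h u' = h v').
  { intros u v Euv al u' Hs.
    assert (Hin : str D2 (h u) (al, h u')).
    { pose proof (Hh u) as E1. simpl in E1. rewrite E1. exists u'. simpl. auto. }
    rewrite Euv in Hin. destruct (hom_closed _ _ _ _ Hh v _ _ Hin) as (v' & Hv & Hv'). exists v'. simpl in Hv. auto. }
  intros u v Euv. split.
  - apply K; auto.
  - intros al v' Hs. destruct (K v u (eq_sym Euv) al v' Hs) as (u' & Hu & E'). eauto.
Qed.

Lemma kproof (D2 : dialg IdF (TF prefix)) (h : proc -> car D2)
  (Hk : forall x x', h x = h x' -> bisim x x') (Hs : forall y, exists x, h x = y) (y : car D2) :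
  exists x, (fun z => exists x0, h x0 = y /\ bisim x0 z) = bisim x.
Proof.
  destruct (Hs y) as [x0 Hx0]. exists x0.
  apply functional_extensionality; intro z; apply propositional_extensionality. split.
  - intros (x & Ex & Hb). eapply bisim_trans; [|exact Hb]. apply Hk. congruence.
  - intro H. eauto.
Qed.

Definition kmap (D2 : dialg IdF (TF prefix)) (h : proc -> car D2)
  (Hk : forall x x', h x = h x' -> bisim x x') (Hs : forall y, exists x, h x = y) (y : car D2) : Qc :=
  exist _ (fun z => exists x0, h x0 = y /\ bisim x0 z) (kproof _ _ Hk Hs y).

Lemma TF_comp (L A B0 D : Type) (f : A -> B0) (g : B0 -> D) (S : L * A -> Prop) :
  Fm (TF L) g (Fm (TF L) f S) = Fm (TF L) (fun x => g (f x)) S.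
Proof.
  apply functional_extensionality; intros [lb z]; apply propositional_extensionality; simpl. split.
  - intros (y & (x & Hx & <-) & <-). eauto.
  - intros (x & Hx & <-). eauto.
Qed.

Lemma cond1 : R_conditions (ccs_coalg C) R_g.
Proof.
  split.
  - intro h. exists hq. split; [apply hq_Rg|].
    destruct h as [D2 hm Hepi]. simpl.
    pose proof (epi_surj _ _ _ _ Hepi) as Hs.
    assert (Hk : forall x x', hm x = hm x' -> bisim x x') by (apply ker_bisim; apply Hepi).
    assert (Kh : forall x, kmap _ _ Hk Hs (hm x) = qmap x).
    { intro x. apply sig_ext. simpl. apply functional_extensionality; intro z; apply propositional_extensionality.
      split.
      - intros (x0 & E & Hb). eapply bisim_trans; [|exact Hb]. apply bisim_sym, Hk; auto.
      - eauto. }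
    exists (kmap _ _ Hk Hs). split; [|exact Kh].
    apply surj_epi.
    + intro y. destruct (Hs y) as [x0 <-].
      transitivity (Fm (TF prefix) qmap (str (ccs_coalg C) x0)).
      * change (str Qd (kmap _ _ Hk Hs (hm x0)) = Fm (TF prefix) qmap (str (ccs_coalg C) x0)).
        rewrite Kh. exact (qmap_hom x0).
      * pose proof (proj1 Hepi x0) as E2.
        change (str D2 (hm x0) = Fm (TF prefix) hm (str (ccs_coalg C) x0)) in E2.
        change (Fm (TF prefix) qmap (str (ccs_coalg C) x0) = Fm (TF prefix) (kmap _ _ Hk Hs) (str D2 (hm x0))).
        rewrite E2, TF_comp. f_equal. apply functional_extensionality; intro; rewrite Kh; reflexivity.
    + intro cc. destruct (qmap_surj cc) as [x <-]. exists (hm x). apply Kh.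
  - intros x x' y y' H1 H2. simpl in *. subst. reflexivity.
Qed.

End Harm.

Theorem proposition5 (C : Type)
  (C_countable : exists e : C -> nat, forall a b : C, e a = e b -> a = b) :
  (* (1) R_(X,g) satisfies conditions (1) and (2) *)
  R_conditions (ccs_coalg C) R_g /\
  (* (2) id_{FX} : F-bar -> F o Id-bar, for (X,g) and R_(X,g) *)
  is_invariant (ccs_coalg C) R_g FF (compF FF IdF) (fun z => z) /\
  (* (3) delta : F o T-bar -> B-bar, for (X,g) and R_(X,g) *)
  is_invariant (ccs_coalg C) R_g (compF FF (TF (prefix C))) BF delta /\
  (* (4) lambda : Id-bar -> T o F-bar, for (X,f) and R_(X,f) *)
  is_invariant (ccs_dialg C) R_f IdF (compF (TF (prefix C)) FF) lambda /\
  (* (5) mu : T o B-bar -> T-bar, for (X,f) and R_(X,f) *)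
  is_invariant (ccs_dialg C) R_f (compF (TF (prefix C)) BF) (TF (prefix C)) mu.
Proof.
  split; [apply cond1|].
  split; [intros x1 x2 h _ E; exact E|].
  split.
  - intros z1 z2 h Hr E.
    destruct z1 as [p1|[p1 p2]], z2 as [q1|[q1 q2]]; simpl in E; try discriminate.
    + injection E as E. simpl.
      apply functional_extensionality; intro y.
      pose proof (equal_f E (tau C, y)) as E'. simpl in E'. exact E'.
    + injection E as E1 E2.
      assert (K : forall p1 p2 q1 q2 : Fo (TF (prefix C)) (proc C),
        Fm (TF (prefix C)) (omap h) p1 = Fm (TF (prefix C)) (omap h) q1 ->
        Fm (TF (prefix C)) (omap h) p2 = Fm (TF (prefix C)) (omap h) q2 ->
        forall z, (exists w, delta (inr (p1, p2)) w /\ omap h w = z) ->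
                  (exists w, delta (inr (q1, q2)) w /\ omap h w = z)).
      { clear E1 E2. intros p1' p2' q1' q2' E1 E2 z (w & Hw & <-).
        destruct Hw as (x & y & a & -> & Hd).
        assert (G : forall (p q : Fo (TF (prefix C)) (proc C)) al v,
                  Fm (TF (prefix C)) (omap h) p = Fm (TF (prefix C)) (omap h) q ->
                  p (al, v) -> exists v', q (al, v') /\ omap h v' = omap h v).
        { intros p q al v E Hp. pose proof (equal_f E (al, omap h v)) as E'. simpl in E'.
          assert (Hl : exists x0, p (al, x0) /\ omap h x0 = omap h v) by eauto.
          rewrite E' in Hl. exact Hl. }
        destruct Hd as [[H1 H2]|[H1 H2]].
        - destruct (G _ _ _ _ E1 H1) as (x' & Hx' & Ex). destruct (G _ _ _ _ E2 H2) as (y' & Hy' & Ey).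
          exists (Par x' y'). split; [exists x', y', a; auto|]. apply Hr; auto.
        - destruct (G _ _ _ _ E1 H1) as (x' & Hx' & Ex). destruct (G _ _ _ _ E2 H2) as (y' & Hy' & Ey).
          exists (Par x' y'). split; [exists x', y', a; auto|]. apply Hr; auto. }
      apply functional_extensionality; intro z; apply propositional_extensionality.
      split; apply K; auto.
  - split.
    + intros x1 x2 h _ E. simpl in E.
      assert (K : forall x1 x2 : proc C, omap h x1 = omap h x2 -> forall p,
          Fm (compF (TF (prefix C)) FF) (omap h) (lambda x1) p ->
          Fm (compF (TF (prefix C)) FF) (omap h) (lambda x2) p).
      { clear x1 x2 E. intros x1 x2 E [lb z] (w & Hw & Ew). unfold lambda in *. simpl in *.
        destruct Hw as [[-> ->]|[(a & -> & ->)|(a & -> & ->)]].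
        - exists (inl x2). split; [left; auto|]. rewrite <- E. exact Ew.
        - exists (inr (x2, Sum [(out a, nil0)])). split; [right; left; eauto|]. rewrite <- E. exact Ew.
        - exists (inr (x2, Sum [(inp a, nil0)])). split; [right; right; eauto|]. rewrite <- E. exact Ew. }
      apply functional_extensionality; intro p; apply propositional_extensionality.
      split; apply K; auto.
    + intros q1 q2 h _ E.
      assert (K : forall q1 q2 : Fo (compF (TF (prefix C)) BF) (proc C),
          Fm (compF (TF (prefix C)) BF) (omap h) q1 = Fm (compF (TF (prefix C)) BF) (omap h) q2 ->
          forall p, Fm (TF (prefix C)) (omap h) (mu q1) p -> Fm (TF (prefix C)) (omap h) (mu q2) p).
      { clear q1 q2 E. intros q1 q2 E [lb y] Hy.
        destruct Hy as (x & (q' & Hq & Hx) & Ex). simpl in Hq, Hx, Ex.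
        assert (Hl : Fm (compF (TF (prefix C)) BF) (omap h) q1 (lb, Fm BF (omap h) q'))
          by (simpl; eauto).
        rewrite E in Hl. destruct Hl as (q'' & Hq'' & Eq). simpl in Hq'', Eq.
        assert (Hm : exists x0, q'' x0 /\ omap h x0 = omap h x).
        { assert (Hq'x : exists x0, q' x0 /\ omap h x0 = omap h x) by eauto.
          pose proof (equal_f Eq (omap h x)) as E3. cbv beta in E3. rewrite <- E3 in Hq'x. exact Hq'x. }
        destruct Hm as (x'' & Hx'' & Ex''). exists x''. split; [exists q''; auto|]. simpl. congruence. }
      apply functional_extensionality; intro p; apply propositional_extensionality.
      split; apply K; auto.
Qed.
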